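(* Let $\mathcal{G}=(\mathcal{V},\mathcal{A})$ be the information-flow graph of a single-sender single-uniprior index-coding instance with message lengths $q_1,\dots,q_n$. Then \[ \ell^*(\mathcal{G}) \geq \sum_{k \in \mathcal{V}} q_k - \sum_{i \in \mathcal{L}(\mathcal{G})} q_i - \sum_{\mathcal{V}_{S} \in \mathbb{V}} \min_{a \in \mathcal{V}_{S}} q_a, \] where $\mathbb{V}$ is the set of vertex sets of all leaf SCCs of $\mathcal{G}$.
   Context: Single-sender single-uniprior index coding: there are $n$ receivers and $n$ independent messages $x_1,\dots,x_n$; message $x_i$ consists of $q_i\ge 1$ bits, each independently uniformly distributed on $\{0,1\}$. A single sender knows all messages. Receiver $i$ knows $x_i$ a priori and requests a set $\mathcal{W}_i$ of messages with $x_i\notin\mathcal{W}_i$. The information-flow graph is the directed graph $\mathcal{G}=(\mathcal{V},\mathcal{A})$ with $\mathcal{V}=\{1,\dots,n\}$ and an arc $(j\to i)\in\mathcal{A}$ iff $x_j\in\mathcal{W}_i$. An index code of length $\ell$ consists of an encoding function $E:\{0,1\}^{\sum_i q_i}\to\{0,1\}^\ell$ and, for each receiver $i$, a decoding function $D_i$ such that $D_i(E(x_1,\dots,x_n),x_i)$ equals the tuple of messages in $\mathcal{W}_i$ for all values of the messages. $\ell^*(\mathcal{G})$ denotes the minimum length of an index code. A leaf vertex is a vertex with no outgoing arcs; $\mathcal{L}(\mathcal{G})$ is the set of leaf vertices. A strongly connected component (SCC) is a maximal subgraph in which every ordered pair of vertices is joined by a directed path inside the subgraph. A leaf SCC is an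 SCC with at least two vertices from which no arc goes to a vertex outside the SCC. *)

(* Defs.v *)
From mathcomp Require Import all_boot.
Set Implicit Arguments. Unset Strict Implicit. Unset Printing Implicit Defensive.

Section IndexCoding.
Variables (n : nat) (q : 'I_n -> nat) (W : 'I_n -> {set 'I_n}).

Definition messages := forall i : 'I_n, (q i).-tuple bool.

Definition index_code (l : nat) : Prop :=
  exists (E : messages -> l.-tuple bool)
         (D : forall i j : 'I_n, l.-tuple bool -> (q i).-tuple bool -> (q j).-tuple bool),
    forall (x : messages) (i j : 'I_n), j \in W i -> D i j (E x) (x i) = x j.

Definition arc : rel 'I_n := fun j i => j \in W i.

Definition leaves : {set 'I_n} := [set i | [forall k, ~~ arc i k]].

Definition scc (v : 'I_n) : {set 'I_n} :=
  [set u | connect arc v u && connect arc u v].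

Definition leaf_sccs : {set {set 'I_n}} :=
  [set S : {set 'I_n} | [&& [exists v, S == scc v], 1 < #|S|
                          & [forall u in S, forall w, arc u w ==> (w \in S)]]].

(* min_{a in S} q_a (for nonempty S; the neutral element is the max over S) *)
Definition maxq (S : {set 'I_n}) : nat := \max_(a in S) q a.
Definition minq (S : {set 'I_n}) : nat := \big[minn/maxq S]_(a in S) q a.

End IndexCoding.

(* Main.v *)
Require Import Defs.
From mathcomp Require Import all_boot.
Set Implicit Arguments. Unset Strict Implicit. Unset Printing Implicit Defensive.

Section Proof.
Variables (n : nat) (q : 'I_n -> nat) (W : 'I_n -> {set 'I_n}).
Hypothesis hW : forall i, i \notin W i.

Lemma count_bound (A : {set 'I_n}) l (E : messages q -> l.-tuple bool) :
  (forall x y : messages q, (forall i, i \notin A -> x i = y i) -> E x = E y ->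
     forall j, x j = y j) ->
  \sum_(i in A) q i <= l.
Proof.
move=> Hinj.
pose M := (\max_(i < n) q i).+1.
have qM i : q i < M by rewrite ltnS (leq_bigmax i).
pose B := [set p : 'I_n * 'I_M | (p.1 \in A) && (p.2 < q p.1)].
pose x0 : messages q := fun i => [tuple false | _ < q i].
pose mk (f : {ffun 'I_n * 'I_M -> bool}) : messages q :=
  fun i => if i \in A then [tuple f (i, inord k) | k < q i] else x0 i.
pose F := pffun_on false B (predT : {pred bool}).
have cardB : #|B| = \sum_(i in A) q i.
  rewrite -sum1_card.
  rewrite (eq_bigl (fun p : 'I_n * 'I_M => (p.1 \in A) && (p.2 < q p.1))); last first.
    by move=> p; rewrite inE.
  rewrite -(pair_big_dep (fun i => i \in A) (fun i (j : 'I_M) => j < q i) (fun _ _ => 1)) /=.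
  apply: eq_bigr => i _.
  transitivity (\sum_(0 <= j < q i) 1); last by rewrite sum_nat_const_nat subn0 muln1.
  rewrite (big_nat_widen 0 (q i) M) ?(ltnW (qM i)) // big_mkord.
  by apply: eq_bigl.
have cardF : #|F| = 2 ^ #|B| by rewrite card_pffun_on card_bool.
have injF : {in F &, injective (fun f => E (mk f))}.
  move=> f g fF gF /= Eeq.
  have hx := Hinj (mk f) (mk g) (fun i iA => ltac:(by rewrite /mk (negbTE iA))) Eeq.
  apply/ffunP => [[i k]].
  case: (boolP ((i, k) \in B)) => [|nB].
    rewrite inE /= => /andP[iA kq].
    have := congr1 (fun t => tnth t (Ordinal kq)) (hx i).
    by rewrite /mk iA !tnth_mktuple /= inord_val.
  move/pffun_onP: fF => [sf _]; move/pffun_onP: gF => [sg _].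
  have fk : f (i, k) = false.
    apply/eqP; apply: contraR nB => h; by apply: (subsetP sf); rewrite unfold_in /= h.
  have gk : g (i, k) = false.
    apply/eqP; apply: contraR nB => h; by apply: (subsetP sg); rewrite unfold_in /= h.
  by rewrite fk gk.
have := @leq_card_in _ _ (fun f => E (mk f)) _ injF.
by rewrite cardF card_tuple card_bool leq_exp2l // cardB.
Qed.


Lemma scc_eq a v : a \in scc W v -> scc W v = scc W a.
Proof.
rewrite inE => /andP[va av]; apply/setP => u; rewrite !inE.
apply/andP/andP => -[h1 h2]; split.
- exact: connect_trans av h1.
- exact: connect_trans h2 va.
- exact: connect_trans va h1.
- exact: connect_trans h2 av.
Qed.

Lemma minq_ge a (S : {set 'I_n}) : a \in S -> (forall b, b \in S -> q a <= q b) -> q a <= minq q S.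
Proof.
move=> aS h; rewrite /minq.
apply: (big_ind (fun m => q a <= m)).
- exact: leq_bigmax_cond.
- by move=> x y hx hy; rewrite leq_min hx hy.
- exact: h.
Qed.

Definition rep (i0 : 'I_n) (S : {set 'I_n}) :=
  odflt i0 [pick a in S | [forall b in S, q a <= q b]].

Lemma rep_spec i0 S : S \in leaf_sccs W -> rep i0 S \in S /\ q (rep i0 S) <= minq q S.
Proof.
rewrite inE => /and3P[_ cS _].
have [a0 a0S] : exists a, a \in S.
  by apply/card_gt0P; apply: ltn_trans cS.
rewrite /rep; case: pickP => [a /andP[aS /forall_inP h] | none] /=.
  by split => //; apply: minq_ge aS h.
case: (arg_minnP q a0S) => a aS amin.
have : (a \in S) && [forall b in S, q a <= q b] by apply/andP; split; [exact: aS | apply/forall_inP].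
by move: (none a) => /= ->.
Qed.

Definition Rem i0 := leaves W :|: [set rep i0 S | S in leaf_sccs W].

Lemma sumU (A B : {set 'I_n}) :
  \sum_(a in A :|: B) q a <= \sum_(a in A) q a + \sum_(a in B) q a.
Proof.
rewrite big_mkcond [X in _ <= X + _]big_mkcond [X in _ <= _ + X]big_mkcond -big_split /=.
apply: leq_sum => i _; rewrite inE; case: (i \in A); case: (i \in B) => /=; by rewrite ?addn0 ?add0n ?leq_addr.
Qed.

Lemma sum_Rem i0 : \sum_(a in Rem i0) q a <=
  \sum_(i in leaves W) q i + \sum_(S in leaf_sccs W) minq q S.
Proof.
apply: leq_trans (sumU _ _) _; rewrite leq_add2l.
rewrite big_imset /=; last first.
  move=> S S' hS hS' e.
  have [rS _] := rep_spec i0 hS; have [rS' _] := rep_spec i0 hS'.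
  move: hS hS'; rewrite !inE => /and3P[/existsP[v /eqP eS] _ _] /and3P[/existsP[v' /eqP eS'] _ _].
  have E1 : S = scc W (rep i0 S) by rewrite {1}eS; apply: scc_eq; rewrite -eS.
  have E2 : S' = scc W (rep i0 S') by rewrite {1}eS'; apply: scc_eq; rewrite -eS'.
  by rewrite E1 E2 e.
by apply: leq_sum => S hS; case: (rep_spec i0 hS).
Qed.

Lemma reach i0 (j : 'I_n) : exists2 r, r \in Rem i0 & connect (Defs.arc W) j r.
Proof.
pose reach u := [set w | connect (Defs.arc W) u w].
have jj : j \in reach j by rewrite inE connect0.
case: (arg_minnP (fun u => #|reach u|) jj) => u ju umin.
have {}ju : u \in reach j := ju. rewrite inE in ju.
have back w : connect (Defs.arc W) u w -> connect (Defs.arc W) w u.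
  move=> uw.
  have sub : reach w \subset reach u.
    by apply/subsetP => z; rewrite !inE => /(connect_trans uw).
  have le1 := subset_leq_card sub.
  have wj : w \in reach j by rewrite inE (connect_trans ju uw).
  have le2 : #|reach u| <= #|reach w| := umin w wj.
  have eqc : #|reach w| = #|reach u| by apply/eqP; rewrite eqn_leq le1 le2.
  have := (subset_cardP eqc sub) u; rewrite !inE connect0 => ->.
  by [].
case: (boolP (u \in leaves W)) => [uL | uNL].
  by exists u => //; rewrite inE uL.
have [w uw] : exists w, Defs.arc W u w.
  move: uNL; rewrite inE negb_forall => /existsP[w]; rewrite negbK => h; by exists w.
have Sl : scc W u \in leaf_sccs W.
  rewrite inE; apply/and3P; split.
  - by apply/existsP; exists u.
  - have uS : u \in scc W u by rewrite inE connect0.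
    have wS : w \in scc W u by rewrite inE connect1 // back // connect1.
    have uw' : u != w by apply/eqP => e; move: uw; rewrite /Defs.arc e (negbTE (hW w)).
    apply: leq_trans (subset_leq_card (_ : [set u; w] \subset scc W u)).
      by rewrite cards2 uw'.
    by apply/subsetP => z; rewrite in_setU !in_set1 => /orP[] /eqP ->.
  - apply/forall_inP => x; rewrite inE => /andP[ux _]; apply/forallP => y; apply/implyP => xy.
    have uy : connect (Defs.arc W) u y by apply: connect_trans ux (connect1 xy).
    by rewrite inE uy back.
have [rS _] := rep_spec i0 Sl.
exists (rep i0 (scc W u)).
  by rewrite inE; apply/orP; right; apply/imsetP; exists (scc W u).
by move: rS; rewrite inE => /andP[ur _]; apply: connect_trans ju ur.
Qed.

End Proof.

Theorem theorem1 (n : nat) (q : 'I_n -> nat) (W : 'I_n -> {set 'I_n})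
  (hq : forall i, 0 < q i) (hW : forall i, i \notin W i) (l : nat) :
  index_code q W l ->
  \sum_(k < n) q k - \sum_(i in leaves W) q i
    - \sum_(S in leaf_sccs W) minq q S <= l.
Proof.
case: n q W hq hW => [|n] q W hq hW.
  by rewrite big_ord0.
move=> [E [D HD]].
pose i0 : 'I_n.+1 := ord0.
have dec : forall x y : messages q, (forall i, i \notin ~: Rem q W i0 -> x i = y i) ->
    E x = E y -> forall j, x j = y j.
  move=> x y hxy Exy j.
  have [r rR jr] := reach q hW i0 j.
  have {}hxy : x r = y r by apply: hxy; rewrite inE rR.
  case/connectP: jr => p pp lp; rewrite lp in hxy.
  elim: p j pp {lp} hxy => [|i p IH] j //= /andP[ji pp] hl.
  have xi := IH i pp hl.
  by rewrite -(HD x i j ji) -(HD y i j ji) Exy xi.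
have cb := count_bound dec.
have sR := sum_Rem q W i0.
rewrite (bigID (fun k => k \in Rem q W i0)) /=.
have -> : \sum_(i < n.+1 | i \notin Rem q W i0) q i = \sum_(i in ~: Rem q W i0) q i.
  by apply: eq_bigl => i; rewrite in_setC.
by rewrite -subnDA leq_subLR leq_add.
Qed.
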